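(* Let $\mathfrak{U}$ be a Banach algebra such that $\mathfrak{U}^\sharp$ is symmetrically pseudo-amenable. Then every bounded Jordan derivation from $\mathfrak{U}$ into a symmetric Banach $\mathfrak{U}$-bimodule $X$ is a derivation.
   Context: A Banach $\mathfrak{U}$-bimodule $X$ is symmetric if $ax=xa$ for all $a\in\mathfrak{U}$, $x\in X$. $\mathfrak{U}^\sharp=\mathfrak{U}\oplus\mathbb{C}1$ is the unitization of $\mathfrak{U}$ with the $\ell^1$-norm (a unit is adjoined even if $\mathfrak{U}$ is unital). A linear map $\delta:\mathfrak{U}\to X$ is a derivation if $\delta(ab)=\delta(a)b+a\delta(b)$, and a Jordan derivation if $\delta(ab+ba)=\delta(a)b+a\delta(b)+\delta(b)a+b\delta(a)$, for all $a,b$. For a Banach algebra $\mathfrak{A}$, $\mathfrak{A}\widehat{\otimes}\mathfrak{A}$ is the projective tensor product with $a(b\otimes c)=ab\otimes c$, $(b\otimes c)a=b\otimes ca$, $\pi(b\otimes c)=bc$ (extended linearly and continuously); the flip is $(b\otimes c)^\circ=c\otimes b$ and $\mathbf{t}$ is symmetric if $\mathbf{t}^\circ=\mathbf{t}$. A symmetric approximate diagonal is a net $\{\mathbf{t}_\lambda\}$ (not necessarily bounded) of symmetric elements with $a\mathbf{t}_\lambda-\mathbf{t}_\lambda a\to0$ and $\pi(\mathbf{t}_\lambda)a\to a$ for all $a\in\mathfrak{A}$; $\mathfrak{A}$ is symmetrically pseudo-amenable if it has one. *)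

(* Defs.v *)
From HB Require Import structures.
From mathcomp Require Import all_boot all_order all_algebra.
From mathcomp Require Import all_classical all_reals all_analysis.
From mathcomp Require Import complex.
Set Implicit Arguments. Unset Strict Implicit. Unset Printing Implicit Defensive.
Import Order.TTheory GRing.Theory Num.Theory.
Import numFieldNormedType.Exports.
Local Open Scope ring_scope.

Local Open Scope complex_scope.
Definition Cplx (R : realType) : numFieldType := R[i].
Local Close Scope complex_scope.

Section Defs.
Variable K : numFieldType.

Definition bilinear_map (V W Y : lmodType K) (f : V -> W -> Y) : Prop :=
  (forall (c : K) x x' y, f (c *: x + x') y = c *: f x y + f x' y) /\
  (forall (c : K) x y y', f x (c *: y + y') = c *: f x y + f x y').

(* A (not necessarily unital) Banach algebra structure on the Banach space U,
   with multiplication mul (completeness comes from the type of U). *)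
Record banach_algebra (U : normedModType K) (mul : U -> U -> U) : Prop := {
  ba_bilinear : bilinear_map mul;
  ba_assoc : forall a b c, mul (mul a b) c = mul a (mul b c);
  ba_submult : forall a b, `|mul a b| <= `|a| * `|b| }.

Record banach_bimodule (U X : normedModType K) (mul : U -> U -> U)
    (lact : U -> X -> X) (ract : X -> U -> X) : Prop := {
  bm_lbilinear : bilinear_map lact;
  bm_rbilinear : bilinear_map ract;
  bm_lassoc : forall a b x, lact (mul a b) x = lact a (lact b x);
  bm_rassoc : forall a b x, ract x (mul a b) = ract (ract x a) b;
  bm_mid : forall a b x, lact a (ract x b) = ract (lact a x) b;
  bm_bounded : exists M : K, 0 < M /\
     forall a x, `|lact a x| <= M * `|a| * `|x| /\ `|ract x a| <= M * `|a| * `|x| }.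

Definition symmetric_bimodule (U X : Type) (lact : U -> X -> X) (ract : X -> U -> X) :=
  forall a x, lact a x = ract x a.

Definition linear_map (V Y : lmodType K) (D : V -> Y) : Prop :=
  forall (c : K) a b, D (c *: a + b) = c *: D a + D b.

Definition bounded_map (V Y : normedModType K) (D : V -> Y) : Prop :=
  exists M : K, forall a, `|D a| <= M * `|a|.

Definition derivation (U X : lmodType K) (mul : U -> U -> U)
    (lact : U -> X -> X) (ract : X -> U -> X) (D : U -> X) : Prop :=
  linear_map D /\ forall a b, D (mul a b) = ract (D a) b + lact a (D b).

Definition jordan_derivation (U X : lmodType K) (mul : U -> U -> U)
    (lact : U -> X -> X) (ract : X -> U -> X) (D : U -> X) : Prop :=
  linear_map D /\ forall a b,
    D (mul a b + mul b a) = ract (D a) b + lact a (D b) + ract (D b) a + lact b (D a).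

(* ---- Unitization U^# = U (+) K 1, with the l^1-norm ---- *)
Definition unit_mul (U : lmodType K) (mul : U -> U -> U) (x y : U * K) : U * K :=
  (mul x.1 y.1 + x.2 *: y.1 + y.2 *: x.1, x.2 * y.2).

(* the underlying normed space of U^# (topology only used; the norm is unit_norm) *)
Definition unitz (U : normedModType K) : normedModType K := (U * K)%type.

Definition unit_norm (U : normedModType K) (x : U * K) : K := `|x.1| + `|x.2|.

(* ---- Elements of the projective tensor product U^# (x)^ U^# ----
   Every element of the completed projective tensor product is represented
   by an absolutely summable series  sum_n b_n (x) c_n. *)
Definition tens_rep (U : Type) := nat -> (U * K) * (U * K).

Definition abs_summable (U : normedModType K) (t : tens_rep U) : Prop :=
  exists M : K, forall N, \sum_(n < N) unit_norm (t n).1 * unit_norm (t n).2 <= M.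

Definition bil_bounded (U Y : normedModType K) (Phi : U * K -> U * K -> Y) (M : K) :=
  bilinear_map Phi /\ forall x y, `|Phi x y| <= M * unit_norm x * unit_norm y.

(* The image  sum_n Phi(b_n, c_n)  of t under the linearization of Phi. *)
Definition tens_eval (U Y : normedModType K) (Phi : U * K -> U * K -> Y)
    (t : tens_rep U) : Y :=
  limn (series (fun n => Phi (t n).1 (t n).2)).

Definition tens_pi (U : normedModType K) (mul : U -> U -> U) (t : tens_rep U) : U * K :=
  limn (series (fun n => unit_mul mul (t n).1 (t n).2) : nat -> unitz U).

Definition directed (I : Type) (le : I -> I -> Prop) : Prop :=
  (exists i : I, True) /\ (forall i, le i i) /\
  (forall i j k, le i j -> le j k -> le i k) /\
  (forall i j, exists k, le i k /\ le j k).

(* U^# is symmetrically pseudo-amenable: there is a net (t_i) of symmetric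
   elements of U^# (x)^ U^# with  a t_i - t_i a -> 0  (in projective norm)
   and  pi(t_i) a -> a,  for all a in U^#.
   - equality t^o = t in the completed projective tensor product is tested
     against all bounded bilinear maps into Banach spaces (universal property);
   - the projective norm ||u||_pi equals the sup of ||Phi~(u)|| over all
     contractive bilinear maps Phi into Banach spaces (universal property). *)
Definition unitization_sym_pseudo_amenable (U : normedModType K)
    (mul : U -> U -> U) : Prop :=
  exists (I : Type) (le : I -> I -> Prop) (t : I -> tens_rep U),
    directed le /\
    (forall i, abs_summable (t i)) /\
    (forall i (Y : completeNormedModType K) (Phi : U * K -> U * K -> Y) (M : K),
        bil_bounded Phi M ->
        tens_eval (fun x y => Phi y x) (t i) = tens_eval Phi (t i)) /\
    (forall (a : U * K) (eps : K), 0 < eps -> exists i0, forall i, le i0 i ->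
        forall (Y : completeNormedModType K) (Phi : U * K -> U * K -> Y),
          bil_bounded Phi 1 ->
          `|tens_eval (fun x y => Phi (unit_mul mul a x) y) (t i)
            - tens_eval (fun x y => Phi x (unit_mul mul y a)) (t i)| <= eps) /\
    (forall (a : U * K) (eps : K), 0 < eps -> exists i0, forall i, le i0 i ->
        unit_norm (unit_mul mul (tens_pi mul (t i)) a - a) <= eps).

End Defs.

(* Main.v *)
Require Import Defs.
From HB Require Import structures.
From mathcomp Require Import all_boot all_order all_algebra.
From mathcomp Require Import all_classical all_reals all_analysis.
From mathcomp Require Import complex.
From mathcomp Require Import ring lra.
Import Order.TTheory GRing.Theory Num.Theory.
Import numFieldNormedType.Exports.
Local Open Scope ring_scope.
Local Open Scope complex_scope.

Section A.
Variable R : realType.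
Local Notation K := (Cplx R).

Lemma Kreal_eq (z : K) : z \is Num.real -> ((complex.Re (z : R[i]))%:C : K) = z.
Proof. exact: RRe_real. Qed.

Lemma Kle_Re (x y : K) : x <= y -> complex.Re (x : R[i]) <= complex.Re (y : R[i]).
Proof. by rewrite lecE => /andP[]. Qed.

Lemma Kgt0_Re (x : K) : 0 < x -> 0 < complex.Re (x : R[i]).
Proof. by rewrite ltcE => /andP[]. Qed.

Lemma abs_sum_cvg (V : completeNormedModType K) (u : nat -> V) (w : nat -> K) (M : K) :
  (forall n, `|u n| <= w n) -> (forall N, \sum_(n < N) w n <= M) -> cvgn (series u).
Proof.
move=> uw wM.
have w0 n : 0 <= w n by apply: le_trans (uw n).
pose r n := complex.Re (w n : R[i]).
have wr n : w n = (r n)%:C by rewrite Kreal_eq // ger0_real.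
have r0 n : 0 <= r n by have := w0 n; rewrite lecE => /andP[].
have cr : cvgn (series r).
  apply: nondecreasing_is_cvgn.
    by move=> m n mn; rewrite /series /=; apply: nondecreasing_series => // k _ _.
  exists (complex.Re (M : R[i])) => _ [n _ <-].
  have := wM n; rewrite lecE => /andP[_]; apply: le_trans.
  rewrite /series /= raddf_sum /= big_mkord; exact: lexx.
have cr' : cauchy (series r @ \oo)%classic by apply: cvg_cauchy.
move/cauchy_seriesP in cr'.
apply/cauchy_cvgP/cauchy_seriesP => e e0.
have := cr' _ (@Kgt0_Re e e0); apply: filterS => -[a b] /= H.
apply: (le_lt_trans (ler_norm_sum _ _ _)).
apply: (le_lt_trans (ler_sum _ (fun k _ => uw k))).
have -> : \sum_(a <= k < b) w k = (\sum_(a <= k < b) r k)%:C.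
  rewrite raddf_sum; apply: eq_bigr => k _; exact: wr.
rewrite -[e]Kreal_eq ?gtr0_real // ltcR.
exact: le_lt_trans (ler_norm _) H.
Qed.


Lemma sqrt_le_add (x y : R) : Num.sqrt (x^+2 + y^+2) <= `|x| + `|y|.
Proof.
rewrite -(ger0_norm (addr_ge0 (normr_ge0 x) (normr_ge0 y))) -sqrtr_sqr.
apply: ler_wsqrtr; rewrite sqrrD !real_normK ?num_real //.
have : 0 <= `|x| * `|y| by rewrite mulr_ge0.
lra.
Qed.

Lemma Re_le_norm (z : R[i]) : `|complex.Re z| <= complex.Re `|z|.
Proof.
rewrite normc_def /= -sqrtr_sqr; apply: ler_wsqrtr.
by rewrite lerDl sqr_ge0.
Qed.

Lemma Im_le_norm (z : R[i]) : `|complex.Im z| <= complex.Re `|z|.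
Proof.
rewrite normc_def /= -sqrtr_sqr; apply: ler_wsqrtr.
by rewrite lerDr sqr_ge0.
Qed.

Lemma real_abs_cvg (f : nat -> R) (B : R) :
  (forall N, \sum_(n < N) `|f n| <= B) -> cvgn (series f).
Proof.
move=> fB; apply: (@normed_cvg _ R^o).
apply: nondecreasing_is_cvgn.
  by move=> m n mn; rewrite /series /=; apply: nondecreasing_series => // k _ _.
exists B => _ [n _ <-]; apply: le_trans (fB n); rewrite /= /series /= big_mkord; exact: lexx.
Qed.

Lemma K_abs_cvg (u : nat -> K) (M : K) :
  (forall N, \sum_(n < N) `|u n| <= M) -> cvgn (series u).
Proof.
move=> uM.
have cre : cvgn (series (fun n => complex.Re (u n : R[i]))).
  apply: (@real_abs_cvg _ (complex.Re (M : R[i]))) => N.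
  have := Kle_Re _ _ (uM N); apply: le_trans.
  rewrite raddf_sum /=; apply: ler_sum => n _; exact: Re_le_norm.
have cim : cvgn (series (fun n => complex.Im (u n : R[i]))).
  apply: (@real_abs_cvg _ (complex.Re (M : R[i]))) => N.
  apply: (le_trans _ (Kle_Re _ _ (uM N))).
  rewrite raddf_sum /=; apply: ler_sum => n _; exact: Im_le_norm.
set la := limn _ in cre; set lb := limn _ in cim.
move/cvgrPdist_lt: cre => cre; move/cvgrPdist_lt: cim => cim.
apply/cvg_ex; exists ((la +i* lb : R[i]) : K).
apply/cvgrPdist_lt => e e0.
have e20 : 0 < complex.Re (e : R[i]) / 2 by rewrite divr_gt0 // Kgt0_Re.
near=> n.
have h1 := (near (cre _ e20) n). 
have h2 := (near (cim _ e20) n).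
move: h1 h2; rewrite /series /= -!raddf_sum /=.
case: (\sum_(0 <= k < n) u k) => p q /= h1 h2.
rewrite -[e]Kreal_eq ?gtr0_real // ltcR.
have -> : ((la +i* lb : R[i]) - (p +i* q)) = (la - p) +i* (lb - q) by [].
rewrite /Normc.normc /=.
apply: le_lt_trans (sqrt_le_add _ _) _.
rewrite [X in _ < X](splitr (complex.Re (e : R[i]))); apply: ltrD; [exact: h1 | exact: h2].
Unshelve. all: by end_near.
Qed.


Lemma series_pair (U : normedModType K) (f : nat -> U * K) n :
  series f n = (series (fun k => (f k).1) n, series (fun k => (f k).2) n).
Proof.
rewrite /series /=; elim: n => [|n IH]; first by rewrite !big_geq.
by rewrite !big_nat_recr //= IH.
Qed.

Lemma un_ge0 (U : normedModType K) (x : U * K) : 0 <= unit_norm x.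
Proof. by rewrite /unit_norm addr_ge0. Qed.

Lemma bil_ineq (a b c d : K) : 0 <= a -> 0 <= b -> 0 <= c -> 0 <= d ->
  a * c + b * c + d * a <= (a + b) * (c + d).
Proof.
move=> a0 b0 c0 d0.
have -> : (a + b) * (c + d) = a * c + b * c + d * a + b * d by ring.
by rewrite lerDl mulr_ge0.
Qed.

Lemma bil_ineq2 (a b c d : K) : 0 <= a -> 0 <= b -> 0 <= c -> 0 <= d ->
  b * d <= (a + b) * (c + d).
Proof.
move=> a0 b0 c0 d0.
have -> : (a + b) * (c + d) = b * d + (a * c + b * c + d * a) by ring.
by rewrite lerDl !addr_ge0 // mulr_ge0.
Qed.

Section Pi.
Variables (U : completeNormedModType K) (mul : U -> U -> U).
Hypothesis BA : banach_algebra mul.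

Lemma unit_mul_norm1 (x y : U * K) :
  `|(unit_mul mul x y).1| <= unit_norm x * unit_norm y.
Proof.
rewrite /unit_mul /unit_norm /=.
apply: le_trans (ler_normD _ _) _.
apply: le_trans (lerD (ler_normD _ _) (lexx _)) _.
rewrite !normrZ.
apply: le_trans (bil_ineq _ _ _ _ _ _ _ _); rewrite ?normr_ge0 //.
by rewrite lerD2r lerD2r (ba_submult BA).
Qed.

Lemma unit_mul_norm2 (x y : U * K) :
  `|(unit_mul mul x y).2| <= unit_norm x * unit_norm y.
Proof.
rewrite /unit_mul /unit_norm /= normrM.
by apply: bil_ineq2; rewrite normr_ge0.
Qed.

Lemma tens_pi_cvg (t : tens_rep K U) : abs_summable t ->
  let f := fun n => unit_mul mul (t n).1 (t n).2 in
  cvgn (series (fun n => (f n).1)) /\ cvgn (series (fun n => (f n).2)) /\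
  tens_pi mul t = (limn (series (fun n => (f n).1)), limn (series (fun n => (f n).2))).
Proof.
move=> [M tM] f.
have c1 : cvgn (series (fun n => (f n).1)).
  apply: (@abs_sum_cvg _ _ (fun n => unit_norm (t n).1 * unit_norm (t n).2) M) => //.
  move=> n; exact: unit_mul_norm1.
have c2 : cvgn (series (fun n => (f n).2)).
  apply: (@K_abs_cvg _ M) => N; apply: le_trans (tM N).
  apply: ler_sum => n _; exact: unit_mul_norm2.
split => //; split => //.
rewrite /tens_pi.
apply: norm_cvg_lim.
have -> : series f = fun n => (series (fun k => (f k).1) n, series (fun k => (f k).2) n).
  by apply: funext => n; rewrite series_pair.
exact: (cvg_pair c1 c2).
Qed.

End Pi.


Lemma tens_eval_cvg (U : normedModType K) (Y : completeNormedModType K)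
  (Phi : U * K -> U * K -> Y) (M : K) (t : tens_rep K U) :
  0 <= M -> (forall x y, `|Phi x y| <= M * unit_norm x * unit_norm y) ->
  abs_summable t -> cvgn (series (fun n => Phi (t n).1 (t n).2)).
Proof.
move=> M0 PM [Mt tM].
apply: (@abs_sum_cvg _ _ (fun n => M * unit_norm (t n).1 * unit_norm (t n).2) (M * Mt)) => //.
move=> N; under eq_bigr do rewrite -mulrA.
rewrite -mulr_sumr; exact: ler_wpM2l.
Qed.

Lemma tens_evalB (U : normedModType K) (Y : normedModType K)
  (P1 P2 : U * K -> U * K -> Y) (t : tens_rep K U) :
  cvgn (series (fun n => P1 (t n).1 (t n).2)) ->
  cvgn (series (fun n => P2 (t n).1 (t n).2)) ->
  tens_eval (fun x y => P1 x y - P2 x y) t = tens_eval P1 t - tens_eval P2 t.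
Proof.
move=> c1 c2; rewrite /tens_eval.
have -> : (fun n => P1 (t n).1 (t n).2 - P2 (t n).1 (t n).2) =
   (fun n => P1 (t n).1 (t n).2) - (fun n => P2 (t n).1 (t n).2) by [].
rewrite seriesD seriesN -limB //.
Qed.

Lemma tens_evalZ (U : normedModType K) (Y : normedModType K)
  (P : U * K -> U * K -> Y) (c : K) (t : tens_rep K U) :
  cvgn (series (fun n => P (t n).1 (t n).2)) ->
  tens_eval (fun x y => c *: P x y) t = c *: tens_eval P t.
Proof.
move=> cv; rewrite /tens_eval.
have -> : (fun n => c *: P (t n).1 (t n).2) = c *: (fun n => P (t n).1 (t n).2) by [].
rewrite seriesZ limZl_tmp //.
Qed.

Lemma cvg_lip (V W : normedModType K) (g : V -> W) (C : K) (s : nat -> V) (l : V) :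
  0 < C -> (forall v, `|g v - g l| <= C * `|v - l|) ->
  (s @ \oo --> l)%classic -> ((fun n => g (s n)) @ \oo --> g l)%classic.
Proof.
move=> C0 gC /cvgrPdist_lt sl; apply/cvgrPdist_lt => e e0.
have eC : 0 < e / C by rewrite divr_gt0.
near=> n.
have h := near (sl _ eC) n.
rewrite distrC; apply: le_lt_trans (gC _) _.
by rewrite -ltr_pdivlMl // mulrC distrC h.
Unshelve. all: by end_near.
Qed.

End A.

Local Close Scope complex_scope.

Set Implicit Arguments. Unset Strict Implicit.
Lemma ac_sub (V : zmodType) (p q r s : V) : p - q - (r - s) = (p + s) - (q + r).
Proof. by rewrite opprB opprD !addrA (ACl (1*3*2*4)). Qed.

Lemma ac_2 (V : zmodType) (p q : V) : p + q + q + p = (p + q) + (p + q).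
Proof. by rewrite -addrA [q + p]addrC. Qed.

Lemma ac_3 (V : zmodType) (p q s t v d : V) :
  p + q + s + (t + v + d) - (q + v) = p + s + (t + d).
Proof.
by rewrite opprD !addrA (ACl ((1*3*4*6)*(2*7)*(5*8))) /= !subrr !addr0.
Qed.

Section Bil.
Variables (K : numFieldType) (V W Y : lmodType K) (f : V -> W -> Y).
Hypothesis Hf : bilinear_map f.

Lemma bilD1 x x' y : f (x + x') y = f x y + f x' y.
Proof. by have := Hf.1 1 x x' y; rewrite !scale1r. Qed.
Lemma bil01 y : f 0 y = 0.
Proof.
have h := bilD1 0 0 y; rewrite addr0 in h.
by apply: (@addrI _ (f 0 y)); rewrite addr0 -h.
Qed.
Lemma bilZ1 c x y : f (c *: x) y = c *: f x y.
Proof. by have := Hf.1 c x 0 y; rewrite addr0 bil01 addr0. Qed.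
Lemma bilN1 x y : f (- x) y = - f x y.
Proof. by rewrite -scaleN1r bilZ1 scaleN1r. Qed.
Lemma bilB1 x x' y : f (x - x') y = f x y - f x' y.
Proof. by rewrite bilD1 bilN1. Qed.

Lemma bilD2 x y y' : f x (y + y') = f x y + f x y'.
Proof. by have := Hf.2 1 x y y'; rewrite !scale1r. Qed.
Lemma bil02 x : f x 0 = 0.
Proof.
have h := bilD2 x 0 0; rewrite addr0 in h.
by apply: (@addrI _ (f x 0)); rewrite addr0 -h.
Qed.
Lemma bilZ2 c x y : f x (c *: y) = c *: f x y.
Proof. by have := Hf.2 c x y 0; rewrite addr0 bil02 addr0. Qed.
Lemma bilN2 x y : f x (- y) = - f x y.
Proof. by rewrite -scaleN1r bilZ2 scaleN1r. Qed.
Lemma bilB2 x y y' : f x (y - y') = f x y - f x y'.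
Proof. by rewrite bilD2 bilN2. Qed.
End Bil.

Section Lin.
Variables (K : numFieldType) (V Y : lmodType K) (g : V -> Y).
Hypothesis Hg : linear_map g.
Lemma linD x y : g (x + y) = g x + g y.
Proof. by have := Hg 1 x y; rewrite !scale1r. Qed.
Lemma lin0 : g 0 = 0.
Proof.
have h := linD 0 0; rewrite addr0 in h.
by apply: (@addrI _ (g 0)); rewrite addr0 -h.
Qed.
Lemma linZ c x : g (c *: x) = c *: g x.
Proof. by have := Hg c x 0; rewrite addr0 lin0 addr0. Qed.
Lemma linN x : g (- x) = - g x.
Proof. by rewrite -scaleN1r linZ scaleN1r. Qed.
Lemma linB x y : g (x - y) = g x - g y.
Proof. by rewrite linD linN. Qed.
End Lin.

Section Core.
Variable R : realType.
Local Notation K := (Cplx R).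
Variables (U X : completeNormedModType K) (mul : U -> U -> U)
  (lact : U -> X -> X) (ract : X -> U -> X) (D : U -> X).
Hypotheses (BA : banach_algebra mul) (BM : banach_bimodule mul lact ract)
  (SYM : symmetric_bimodule lact ract) (DL : linear_map D)
  (DJ : forall a b, D (mul a b + mul b a) =
        ract (D a) b + lact a (D b) + ract (D b) a + lact b (D a)).

Definition act (v : X) (z : U * K) : X := ract v z.1 + z.2 *: v.
Definition Psi (x y : U * K) : X := act (D x.1) y.

Lemma rcomm x w a : ract x (mul w a) = ract x (mul a w).
Proof.
rewrite (bm_rassoc BM) -SYM -SYM -(bm_lassoc BM) SYM //.
Qed.

Lemma DJs a u : D (mul a u + mul u a) = 2 *: (ract (D a) u + ract (D u) a).
Proof.
by rewrite DJ !SYM scaler_nat mulr2n ac_2.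
Qed.


Lemma core a x y :
  let A := (a, 0) : U * K in
  Psi (unit_mul mul A x) y - Psi x (unit_mul mul y A) -
    (Psi x (unit_mul mul A y) - Psi (unit_mul mul x A) y)
  = 2 *: act (D a) (unit_mul mul x y).
Proof.
have mR := bm_rbilinear BM.
case: x => u al; case: y => w be; rewrite /Psi /act /unit_mul /=.
rewrite !scale0r !addr0 mul0r mulr0 !scale0r !addr0 ac_sub.
have E : D (mul a u + al *: a) + D (mul u a + al *: a) =
   2 *: (ract (D a) u + ract (D u) a + al *: D a).
  rewrite !(linD DL) !(linZ DL) addrACA -(linD DL) DJs [X in _ = X]scalerDr.
  by congr (_ + _); rewrite scaler_nat mulr2n.
have h14 : ract (D (mul a u + al *: a)) w + be *: D (mul a u + al *: a) +
    (ract (D (mul u a + al *: a)) w + be *: D (mul u a + al *: a)) =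
  2 *: (ract (D a) (mul u w) + ract (D u) (mul a w) + al *: ract (D a) w +
       (be *: ract (D a) u + be *: ract (D u) a + (be * al) *: D a)).
  rewrite addrACA -(bilD1 mR) -scalerDr E.
  rewrite (bilZ1 mR) !(bilD1 mR) (bilZ1 mR) -!(bm_rassoc BM).
  rewrite [be *: (2 *: _)]scalerA [be * 2]mulrC -[(2 * be) *: _]scalerA -scalerDr.
  by rewrite !scalerDr scalerA.
have h23 : ract (D u) (mul w a + be *: a) + ract (D u) (mul a w + be *: a) =
   2 *: (ract (D u) (mul a w) + be *: ract (D u) a).
  rewrite !(bilD2 mR) !(bilZ2 mR) rcomm.
  by rewrite scaler_nat mulr2n.
have hr : ract (D a) (mul u w + al *: w + be *: u) + (al * be) *: D a =
  ract (D a) (mul u w) + al *: ract (D a) w + (be *: ract (D a) u + (be * al) *: D a).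
  by rewrite !(bilD2 mR) !(bilZ2 mR) [al * be]mulrC addrA.
by rewrite h14 h23 hr -scalerBr ac_3.
Qed.


Lemma act_bil : bilinear_map act.
Proof.
have mR := bm_rbilinear BM.
split.
  move=> c v v' z; rewrite /act (bilD1 mR) (bilZ1 mR) !scalerDr !scalerA mulrC.
  by rewrite !addrA (ACl (1*3*2*4)).
move=> c v z z'; rewrite /act /= (bilD2 mR) (bilZ2 mR) scalerDl -scalerA scalerDr.
by rewrite !addrA (ACl (1*3*2*4)).
Qed.

Lemma Psi_bil : bilinear_map Psi.
Proof.
have aB := act_bil; split.
  move=> c x x' y; rewrite /Psi /= (linD DL) (linZ DL); exact: aB.1.
move=> c x y y'; rewrite /Psi; exact: aB.2.
Qed.

End Core.

Section BB.
Variable R : realType.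
Local Notation K := (Cplx R).
Variables (U : completeNormedModType K) (mul : U -> U -> U).
Hypothesis BA : banach_algebra mul.

Definition bnd (Y : normedModType K) (P : U * K -> U * K -> Y) (M : K) :=
  forall x y, `|P x y| <= M * unit_norm x * unit_norm y.

Lemma un_mul x y : unit_norm (unit_mul mul x y) <= 2 * (unit_norm x * unit_norm y).
Proof.
rewrite mulr_natl mulr2n {1}/unit_norm.
exact: lerD (unit_mul_norm1 _ _ _ BA x y) (unit_mul_norm2 _ _ _ x y).
Qed.

Variable Y : normedModType K.

Lemma bnd_flip (P : U * K -> U * K -> Y) M : bnd P M -> bnd (fun x y => P y x) M.
Proof. by move=> H x y; rewrite mulrAC; apply: H. Qed.

Lemma bnd_l (P : U * K -> U * K -> Y) M A : 0 <= M -> bnd P M ->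
  bnd (fun x y => P (unit_mul mul A x) y) (M * (2 * unit_norm A)).
Proof.
move=> M0 H x y; apply: le_trans (H _ _) _.
have h : unit_norm (unit_mul mul A x) <= 2 * unit_norm A * unit_norm x.
  by rewrite -mulrA; apply: un_mul.
have -> : M * (2 * unit_norm A) * unit_norm x * unit_norm y =
  M * (2 * unit_norm A * unit_norm x) * unit_norm y by ring.
apply: ler_wpM2r; first exact: un_ge0.
exact: ler_wpM2l.
Qed.

Lemma bnd_r (P : U * K -> U * K -> Y) M A : 0 <= M -> bnd P M ->
  bnd (fun x y => P x (unit_mul mul y A)) (M * (2 * unit_norm A)).
Proof.
move=> M0 H x y; apply: le_trans (H _ _) _.
have h : unit_norm (unit_mul mul y A) <= 2 * unit_norm A * unit_norm y.
  by rewrite -mulrA [unit_norm A * _]mulrC; apply: un_mul.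
have -> : M * (2 * unit_norm A) * unit_norm x * unit_norm y =
  M * unit_norm x * (2 * unit_norm A * unit_norm y) by ring.
apply: ler_wpM2l => //; first by rewrite mulr_ge0 // un_ge0.
Qed.

Lemma bnd_sub (P Q : U * K -> U * K -> Y) M1 M2 : bnd P M1 -> bnd Q M2 ->
  bnd (fun x y => P x y - Q x y) (M1 + M2).
Proof.
move=> H1 H2 x y; apply: le_trans (ler_normB _ _) _.
by rewrite !mulrDl; apply: lerD.
Qed.

Lemma bnd_scale (P : U * K -> U * K -> Y) M c : bnd P M ->
  bnd (fun x y => c *: P x y) (`|c| * M).
Proof.
move=> H x y; rewrite normrZ -!mulrA; apply: ler_wpM2l => //.
by rewrite !mulrA; apply: H.
Qed.

Lemma bil_flip (P : U * K -> U * K -> Y) : bilinear_map P ->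
  bilinear_map (fun x y => P y x).
Proof. by move=> [H1 H2]; split=> c x y y'; [apply: H2 | apply: H1]. Qed.

Lemma bil_sub (P Q : U * K -> U * K -> Y) : bilinear_map P -> bilinear_map Q ->
  bilinear_map (fun x y => P x y - Q x y).
Proof.
move=> [H1 H2] [G1 G2]; split=> c x y y'.
  by rewrite H1 G1 scalerBr opprD addrACA.
by rewrite H2 G2 scalerBr opprD addrACA.
Qed.

Lemma bil_scale (P : U * K -> U * K -> Y) c : bilinear_map P ->
  bilinear_map (fun x y => c *: P x y).
Proof.
move=> [H1 H2]; split=> d x y y'.
  by rewrite H1 scalerDr !scalerA mulrC.
by rewrite H2 scalerDr !scalerA mulrC.
Qed.

Lemma bil_compl (P : U * K -> U * K -> Y) (g : U * K -> U * K) : linear_map g -> bilinear_map P ->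
  bilinear_map (fun x y => P (g x) y).
Proof.
move=> Hg [H1 H2]; split=> c x y y'.
  by rewrite Hg H1.
exact: H2.
Qed.

Lemma bil_compr (P : U * K -> U * K -> Y) (g : U * K -> U * K) : linear_map g -> bilinear_map P ->
  bilinear_map (fun x y => P x (g y)).
Proof.
move=> Hg [H1 H2]; split=> c x y y'.
  exact: H1.
by rewrite Hg H2.
Qed.

Lemma pair_scale1 c (z : U * K) : (c *: z).1 = c *: z.1. Proof. by []. Qed.
Lemma pair_scale2 c (z : U * K) : (c *: z).2 = c * z.2. Proof. by []. Qed.
Lemma pair_add1 (z z' : U * K) : (z + z').1 = z.1 + z'.1. Proof. by []. Qed.
Lemma pair_add2 (z z' : U * K) : (z + z').2 = z.2 + z'.2. Proof. by []. Qed.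

Lemma lin_ml A : linear_map (fun x => unit_mul mul A x).
Proof.
have mB := ba_bilinear BA.
move=> c x x'; apply: injective_projections;
  rewrite /unit_mul ?pair_add1 ?pair_add2 ?pair_scale1 ?pair_scale2 /=.
  rewrite (bilD2 mB) (bilZ2 mB) !scalerDr !scalerDl !scalerA [A.2 * c]mulrC.
  by rewrite !addrA (ACl (1*3*5*2*4*6)).
by rewrite mulrDr mulrCA.
Qed.

Lemma lin_mr A : linear_map (fun x => unit_mul mul x A).
Proof.
have mB := ba_bilinear BA.
move=> c x x'; apply: injective_projections;
  rewrite /unit_mul ?pair_add1 ?pair_add2 ?pair_scale1 ?pair_scale2 /=.
  rewrite (bilD1 mB) (bilZ1 mB) !scalerDr !scalerDl !scalerA [A.2 * c]mulrC.
  by rewrite !addrA (ACl (1*3*5*2*4*6)).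
by rewrite mulrDl mulrA.
Qed.

End BB.


Section C.
Variable R : realType.
Local Notation K := (Cplx R).
Variables (U X : completeNormedModType K) (mul : U -> U -> U)
  (lact : U -> X -> X) (ract : X -> U -> X).
Hypotheses (BA : banach_algebra mul) (BM : banach_bimodule mul lact ract).

Lemma tens_eval_act (v : X) (t : tens_rep K U) : abs_summable t ->
  cvgn (series (fun n => act ract v (unit_mul mul (t n).1 (t n).2))) /\
  tens_eval (fun x y => act ract v (unit_mul mul x y)) t = act ract v (tens_pi mul t).
Proof.
move=> ts.
have [c1 [c2 ->]] := tens_pi_cvg _ _ _ BA _ ts.
set f := fun n => unit_mul mul (t n).1 (t n).2.
set S1 := series (fun n => (f n).1); set S2 := series (fun n => (f n).2).
have mR := bm_rbilinear BM.
have eq : series (fun n => act ract v (f n)) = fun n => ract v (S1 n) + S2 n *: v.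
  apply: funext => n; rewrite /S1 /S2 /series /=; elim: n => [|n IH].
    by rewrite !big_geq // (bil02 mR) scale0r addr0.
  by rewrite !big_nat_recr //= IH (bilD2 mR) scalerDl addrACA.
have [Mb [Mb0 HMb]] := bm_bounded BM.
have cv : (series (fun n => act ract v (f n)) @ \oo -->
            ract v (limn S1) + limn S2 *: v)%classic.
  rewrite eq; apply: cvgD.
    apply: (@cvg_lip _ _ _ (ract v) (Mb * `|v| + 1)).
    - by rewrite ltr_pwDr // mulr_ge0 // ltW.
    - move=> z; rewrite -(bilB2 mR); apply: le_trans (HMb _ _).2 _.
      rewrite mulrAC; apply: ler_wpM2r => //; rewrite lerDl //.
    - exact: c1.
  exact: cvgZr_tmp c2.
split; first by apply/cvg_ex; eexists; exact: cv.
rewrite /tens_eval /act /=.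
exact: norm_cvg_lim cv.
Qed.


Lemma Psi_bound (D : U -> X) (MD Mb : K) :
  (forall u, `|D u| <= MD * `|u|) -> 0 < Mb ->
  (forall a x, `|lact a x| <= Mb * `|a| * `|x| /\ `|ract x a| <= Mb * `|a| * `|x|) ->
  bnd (Psi ract D) ((Mb + 1) * (`|MD| + 1)).
Proof.
move=> HD Mb0 HMb x y; rewrite /Psi /act.
have HD' u : `|D u| <= `|MD| * `|u|.
  have h := HD u; have h0 := le_trans (normr_ge0 _) h.
  by rewrite -[X in _ * X]normr_id -normrM (ger0_norm h0).
apply: le_trans (ler_normD _ _) _; rewrite normrZ.
apply: le_trans (lerD (HMb _ _).2 (lexx _)) _.
have -> : Mb * `|y.1| * `|D x.1| + `|y.2| * `|D x.1| =
  (Mb * `|y.1| + `|y.2|) * `|D x.1| by ring.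
have -> : (Mb + 1) * (`|MD| + 1) * unit_norm x * unit_norm y =
  ((Mb + 1) * unit_norm y) * ((`|MD| + 1) * unit_norm x) by ring.
apply: ler_pM.
- by rewrite addr_ge0 // mulr_ge0 // ltW.
- exact: normr_ge0.
  rewrite /unit_norm mulrDr !mulrDl !mul1r.
  apply: lerD; last by rewrite lerDr mulr_ge0 // ltW.
  by rewrite lerDl.
- apply: le_trans (HD' _) _; rewrite /unit_norm mulrDr !mulrDl !mul1r.
  rewrite -!addrA lerDl !addr_ge0 // mulr_ge0 //.
Qed.

End C.


Section Main.
Variable R : realType.
Local Notation K := (Cplx R).
Variables (U X : completeNormedModType K) (mul : U -> U -> U)
  (lact : U -> X -> X) (ract : X -> U -> X) (D : U -> X).
Hypotheses (BA : banach_algebra mul) (AM : unitization_sym_pseudo_amenable mul)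
  (BM : banach_bimodule mul lact ract) (SYM : symmetric_bimodule lact ract)
  (DB : bounded_map D) (DJd : jordan_derivation mul lact ract D).

Lemma key_ineq (a : U) : exists Q : K, 0 < Q /\
  forall eps : K, 0 < eps -> `|D a| <= eps * Q.
Proof.
have [Mb [Mb0 HMb]] := bm_bounded BM.
have [MD HMD] := DB.
have [DL DJ] := DJd.
have [I [le [tt [dir [summ [symc [c4 c5]]]]]]] := AM.
set C := (Mb + 1) * (`|MD| + 1).
have C0 : 0 < C.
  by rewrite mulr_gt0 // ?addr_gt0 // ltr_pwDr // normr_ge0.
have PsiB : bnd (Psi ract D) C := Psi_bound HMD Mb0 HMb.
pose A := (a, 0) : U * K.
pose Phi := fun x y => C^-1 *: Psi ract D x y.
have PhiBil : bilinear_map Phi := bil_scale C^-1 (Psi_bil BM DL).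
have PhiBnd : bnd Phi 1.
  have PB := bnd_scale C^-1 PsiB.
  by rewrite ger0_norm ?invr_ge0 ?(ltW C0) // mulVf ?gt_eqF // in PB.
pose Phi' := fun x y => Phi y x.
have Phi'Bil : bilinear_map Phi' := bil_flip PhiBil.
have Phi'Bnd : bnd Phi' 1 := bnd_flip PhiBnd.
have PhiBB : bil_bounded Phi 1 by split.
have Phi'BB : bil_bounded Phi' 1 by split.
have Phi3BB : bil_bounded (fun x y => Phi' (unit_mul mul A x) y - Phi' x (unit_mul mul y A))
   (1 * (2 * unit_norm A) + 1 * (2 * unit_norm A)).
  split.
    exact: bil_sub (bil_compl (lin_ml BA A) Phi'Bil) (bil_compr (lin_mr BA A) Phi'Bil).
  exact: bnd_sub (bnd_l BA A ler01 Phi'Bnd) (bnd_r BA A ler01 Phi'Bnd).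
exists (C + (Mb + 1) * `|D a|); split.
  by rewrite ltr_pwDl // mulr_ge0 // addr_ge0 // ltW.
move=> eps e0.
have [_ [_ [_ dirk]]] := dir.
have [i0 Hi0] := c4 A eps e0.
have [i1 Hi1] := c5 (0, 1) eps e0.
have [k [k0 k1]] := dirk i0 i1.
have ts := summ k.
set t := tt k in ts Hi0 Hi1 symc.
have h4a := Hi0 k k0 X Phi PhiBB.
have h4b := Hi0 k k0 X Phi' Phi'BB.
have h5 := Hi1 k k1.
have h3 : tens_eval (fun x y => Phi x (unit_mul mul A y) - Phi (unit_mul mul x A) y) (tt k) =
   tens_eval (fun x y => Phi' (unit_mul mul A x) y - Phi' x (unit_mul mul y A)) (tt k) :=
  symc k X _ _ Phi3BB.
have M20 : 0 <= 1 * (2 * unit_norm A) by rewrite mul1r mulr_ge0 // un_ge0.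
have cv (P : U * K -> U * K -> X) M : 0 <= M -> bnd P M ->
    cvgn (series (fun n => P (tt k n).1 (tt k n).2)).
  by move=> M0 HP; apply: (@tens_eval_cvg _ _ _ P M (tt k) M0 HP ts).
have cE1 := cv _ _ M20 (bnd_l BA A ler01 PhiBnd).
have cE2 := cv _ _ M20 (bnd_r BA A ler01 PhiBnd).
have cE3 := cv _ _ M20 (bnd_l BA A ler01 Phi'Bnd).
have cE4 := cv _ _ M20 (bnd_r BA A ler01 Phi'Bnd).
have cF1 := cv _ _ M20 (bnd_flip (bnd_l BA A ler01 Phi'Bnd)).
have cF2 := cv _ _ M20 (bnd_flip (bnd_r BA A ler01 Phi'Bnd)).
have cG := cv _ _ (addr_ge0 M20 M20) (bnd_sub (bnd_l BA A ler01 PhiBnd) (bnd_r BA A ler01 PhiBnd)).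
have cF := cv _ _ (addr_ge0 M20 M20)
  (bnd_sub (bnd_flip (bnd_l BA A ler01 Phi'Bnd)) (bnd_flip (bnd_r BA A ler01 Phi'Bnd))).
have [cZ hZ] := tens_eval_act BA BM (D a) ts.
have e12 : tens_eval (fun x y => Phi (unit_mul mul A x) y - Phi x (unit_mul mul y A)) (tt k) =
  tens_eval (fun x y => Phi (unit_mul mul A x) y) (tt k) -
  tens_eval (fun x y => Phi x (unit_mul mul y A)) (tt k) := tens_evalB _ _ _ _ _ _ cE1 cE2.
have e34 : tens_eval (fun x y => Phi' (unit_mul mul A x) y - Phi' x (unit_mul mul y A)) (tt k) =
  tens_eval (fun x y => Phi' (unit_mul mul A x) y) (tt k) -
  tens_eval (fun x y => Phi' x (unit_mul mul y A)) (tt k) := tens_evalB _ _ _ _ _ _ cE3 cE4.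
have eall : tens_eval (fun x y => (Phi (unit_mul mul A x) y - Phi x (unit_mul mul y A)) -
     (Phi x (unit_mul mul A y) - Phi (unit_mul mul x A) y)) (tt k) =
  tens_eval (fun x y => Phi (unit_mul mul A x) y - Phi x (unit_mul mul y A)) (tt k) -
  tens_eval (fun x y => Phi x (unit_mul mul A y) - Phi (unit_mul mul x A) y) (tt k) :=
  tens_evalB _ _ _ _ _ _ cG cF.
have ecore : (fun x y => (Phi (unit_mul mul A x) y - Phi x (unit_mul mul y A)) -
     (Phi x (unit_mul mul A y) - Phi (unit_mul mul x A) y)) =
   (fun x y => (2 * C^-1) *: act ract (D a) (unit_mul mul x y)).
  apply: funext => x; apply: funext => y.
  have hc := core BM SYM DL DJ a x y; simpl in hc.
  by rewrite /Phi /A -!scalerBr hc scalerA mulrC.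
have hE : tens_eval (fun x y => Phi (unit_mul mul A x) y) (tt k) -
  tens_eval (fun x y => Phi x (unit_mul mul y A)) (tt k) -
  (tens_eval (fun x y => Phi' (unit_mul mul A x) y) (tt k) -
  tens_eval (fun x y => Phi' x (unit_mul mul y A)) (tt k)) =
  (2 * C^-1) *: act ract (D a) (tens_pi mul (tt k)).
  rewrite -e12 -e34 -h3 -eall ecore.
  by rewrite (tens_evalZ _ _ _ _ _ _ cZ) hZ.
move: hE h5; case: (tens_pi mul (tt k)) => l1 l2 hE h5.
have mB := ba_bilinear BA.
have hu : unit_mul mul (l1, l2) (0, 1) - (0, 1) = (l1, l2 - 1).
  rewrite /unit_mul /= (bil02 mB) scaler0 scale1r mulr1 add0r.
  by apply: injective_projections => /=; rewrite ?add0r ?subr0.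
rewrite hu /unit_norm /= in h5.
have hl1 : `|l1| <= eps by apply: le_trans h5; rewrite lerDl.
have hl2 : `|l2 - 1| <= eps by apply: le_trans h5; rewrite lerDr.
set Z := act ract (D a) (l1, l2) in hE.
have h2 : `|(2 / C) *: Z| <= eps + eps.
  by rewrite -hE; apply: le_trans (ler_normB _ _) _; exact: lerD h4a h4b.
clear hE h4a h4b e12 e34 eall ecore h3 cE1 cE2 cE3 cE4 cF1 cF2 cG cF cv cZ hZ
  c4 c5 symc Hi0 Hi1 Phi3BB PhiBB Phi'BB Phi'Bnd PhiBnd Phi'Bil PhiBil PsiB summ dirk dir.
have c2 : 0 <= 2 / C by rewrite divr_ge0 // ltW.
rewrite normrZ ger0_norm // in h2.
have hZb : `|Z| <= C * eps.
  have -> : `|Z| = (C / 2) * (2 / C * `|Z|) by field; rewrite gt_eqF.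
  have -> : C * eps = (C / 2) * (eps + eps) by field.
  by apply: ler_wpM2l => //; rewrite divr_ge0 // ltW.
have hZD : `|Z - D a| <= (Mb + 1) * eps * `|D a|.
  have -> : Z - D a = ract (D a) l1 + (l2 - 1) *: D a.
    by rewrite /Z /act /= scalerBl scale1r addrA.
  apply: le_trans (ler_normD _ _) _; rewrite normrZ.
  have t1 : `|ract (D a) l1| <= Mb * eps * `|D a|.
    apply: le_trans (HMb _ _).2 _; apply: ler_wpM2r => //.
    by apply: ler_wpM2l => //; exact: ltW.
  have t2 : `|l2 - 1| * `|D a| <= eps * `|D a| by apply: ler_wpM2r.
  apply: le_trans (lerD t1 t2) _.
  have -> : Mb * eps * `|D a| + eps * `|D a| = (Mb + 1) * eps * `|D a| by ring.
  exact: lexx.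
have -> : eps * (C + (Mb + 1) * `|D a|) = C * eps + (Mb + 1) * eps * `|D a| by ring.
rewrite -[D a](subKr Z).
apply: le_trans (ler_normB _ _) _.
rewrite subKr; exact: lerD hZb hZD.
Qed.

End Main.


Theorem corollary5p4 (R : realType)
    (U : completeNormedModType (Cplx R)) (mul : U -> U -> U)
    (X : completeNormedModType (Cplx R))
    (lact : U -> X -> X) (ract : X -> U -> X) (D : U -> X) :
  banach_algebra mul ->
  unitization_sym_pseudo_amenable mul ->
  banach_bimodule mul lact ract ->
  symmetric_bimodule lact ract ->
  bounded_map D ->
  jordan_derivation mul lact ract D ->
  derivation mul lact ract D.
Proof.
move=> BA AM BM SYM DB DJd.
have Dz : forall a, D a = 0.
  move=> a; have [Q [Q0 HQ]] := key_ineq BA AM BM SYM DB DJd a.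
  apply/eqP; rewrite -normr_eq0; apply/negPn/negP => nz.
  have p : 0 < `|D a| by rewrite lt_def nz normr_ge0.
  have e0 : 0 < `|D a| / (2 * Q) by rewrite divr_gt0 // mulr_gt0.
  have := HQ _ e0.
  have -> : `|D a| / (2 * Q) * Q = `|D a| / 2 by field; rewrite gt_eqF.
  move=> h.
  have h2 : `|D a| / 2 < `|D a| by rewrite ltr_pdivrMr // ltr_pMr // ltr1n.
  by have := lt_le_trans h2 h; rewrite ltxx.
split; first exact: DJd.1.
move=> a b; rewrite !Dz (bil01 (bm_rbilinear BM)) (bil02 (bm_lbilinear BM)).
by rewrite addr0.
Qed.
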